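(* With $w=\sqrt{(u+1)^2-4}$, $$\sum_{n\ge0}\Bigl(\sum_{\sigma\in\mathfrak S_n}u^{{\rm lrda}(\sigma)}\beta^{{\rm RLmin}(\sigma)}\Bigr)\frac{t^n}{n!}=e^{\frac{\beta(u-1)}{2}t}\left(\frac{w}{w\cosh\bigl(\frac{wt}{2}\bigr)-(1+u)\sinh\bigl(\frac{wt}{2}\bigr)}\right)^{\beta}.$$
   Context: For $\sigma=\sigma_1\cdots\sigma_n\in\mathfrak S_n$ ($\mathfrak S_0$ = empty permutation): ${\rm lrda}(\sigma)$ is the number of $i$ with $1\le i\le n$ and $\sigma_{i-1}<\sigma_i<\sigma_{i+1}$ (conventions $\sigma_0=0$, $\sigma_{n+1}=+\infty$); ${\rm RLmin}(\sigma)$ is the number of $i$ with $\sigma_j>\sigma_i$ for all $j>i$. Identity of formal power series in $t$; the bracketed base has constant term $1$ and only even powers of $w$ occur; $G^c:=\exp(c\log G)$. *)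

(* Defs.v *)
(* Formal power series in t over a field K of characteristic 0
   (numFieldType), represented by their coefficient sequences nat -> K. *)
From mathcomp Require Import all_boot all_order all_algebra all_fingroup.
Set Implicit Arguments. Unset Strict Implicit. Unset Printing Implicit Defensive.
Import Order.TTheory GRing.Theory Num.Theory.
Local Open Scope ring_scope.

Section PS.
Variable K : numFieldType.

Definition ps := nat -> K.

Definition psC (c : K) : ps := fun n => if n == 0%N then c else 0.
Definition psadd (f g : ps) : ps := fun n => f n + g n.
Definition psscale (c : K) (f : ps) : ps := fun n => c * f n.
Definition psmul (f g : ps) : ps :=
  fun n => \sum_(i < n.+1) f i * g (n - i)%N.
Fixpoint pspow (f : ps) (k : nat) : ps :=
  if k is k'.+1 then psmul f (pspow f k') else psC 1.

Definition pslin (c : K) : ps := fun n => if n == 1%N then c else 0.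

(* exp f = sum_k f^k / k!  (for f with zero constant term; the sum is finite
   coefficientwise) *)
Definition psexp (f : ps) : ps :=
  fun n => \sum_(k < n.+1) pspow f k n / (k`!)%:R.

(* log g = sum_{k>=1} (-1)^(k+1) (g-1)^k / k  (for g with constant term 1) *)
Definition pslog (g : ps) : ps :=
  fun n => \sum_(1 <= k < n.+1) (-1) ^+ k.+1 * pspow (psadd g (psC (-1))) k n / k%:R.

(* multiplicative inverse of f with f 0 <> 0:
   1/f = (1/f0) * sum_k (1 - f/f0)^k *)
Definition psinv (f : ps) : ps :=
  let h := psadd (psC 1) (psscale (- (f 0%N)^-1) f) in
  fun n => (f 0%N)^-1 * \sum_(k < n.+1) pspow h k n.

Definition pspowr (G : ps) (c : K) : ps := psexp (psscale c (pslog G)).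

Definition pscosh (c : K) : ps :=
  psscale (2^-1) (psadd (psexp (pslin c)) (psexp (pslin (- c)))).
Definition pssinh (c : K) : ps :=
  psscale (2^-1) (psadd (psexp (pslin c)) (psscale (-1) (psexp (pslin (- c))))).

End PS.
Local Close Scope ring_scope.

(* Permutation statistics.  For s : 'S_n, sigma_{i+1} = s i (values 0..n-1,
   i.e. shifted by one, which preserves all comparisons). *)
Definition perm_word n (s : 'S_n) : seq nat := [seq val (s i) | i <- enum 'I_n].

(* lrda: positions i (0-based) with sigma_{i-1} < sigma_i < sigma_{i+1},
   with sigma_0 = 0 (= -infinity) and sigma_{n+1} = +infinity. *)
Definition lrda n (s : 'S_n) : nat :=
  let f := fun j => nth 0%N (perm_word s) j in
  count (fun i => ((i == 0%N) || (f i.-1 < f i)) && ((i.+1 == n) || (f i < f i.+1)))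
        (iota 0 n).

Definition RLmin n (s : 'S_n) : nat :=
  let f := fun j => nth 0%N (perm_word s) j in
  count (fun i => all (fun j => f i < f j) (iota i.+1 (n - i.+1))) (iota 0 n).

(* Main.v *)
From HB Require Import structures.
Require Import Defs.
From mathcomp Require Import all_boot all_order all_algebra all_fingroup.
From mathcomp Require Import boolp.
From mathcomp Require Import ring zify.
From Stdlib Require Import FunctionalExtensionality.
Set Implicit Arguments. Unset Strict Implicit. Unset Printing Implicit Defensive.
Import Order.TTheory GRing.Theory Num.Theory.
Local Open Scope ring_scope.

Section PSR.
Variable K : numFieldType.
Definition psr := ps K.
HB.instance Definition _ := gen_eqMixin psr.
HB.instance Definition _ := gen_choiceMixin psr.

Lemma psext (f g : psr) : (forall n, f n = g n) -> f = g.
Proof. move=> h; exact: functional_extensionality h. Qed.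

Definition toP (N : nat) (f : psr) : {poly K} := \poly_(i < N.+1) f i.

Lemma toPE N f j : (j <= N)%N -> (toP N f)`_j = f j.
Proof. by move=> h; rewrite /toP coef_poly ltnS h. Qed.

Lemma coefM_eq n (p q p' q' : {poly K}) :
  (forall j, (j <= n)%N -> p`_j = p'`_j) -> (forall j, (j <= n)%N -> q`_j = q'`_j) ->
  (p * q)`_n = (p' * q')`_n.
Proof.
move=> hp hq; rewrite !coefM; apply: eq_bigr => i _.
rewrite hp ?hq //; [exact: leq_subr | by rewrite -ltnS].
Qed.

Lemma psmulP n (f g : psr) (p q : {poly K}) :
  (forall j, (j <= n)%N -> f j = p`_j) -> (forall j, (j <= n)%N -> g j = q`_j) ->
  psmul f g n = (p * q)`_n.
Proof.
move=> hp hq; rewrite /psmul coefM; apply: eq_bigr => i _.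
rewrite hp ?hq //; [exact: leq_subr | by rewrite -ltnS].
Qed.

Lemma psmulT n (f g : psr) : psmul f g n = (toP n f * toP n g)`_n.
Proof. by apply: psmulP => j hj; rewrite toPE. Qed.

Lemma psmulA' : associative (@psmul K : psr -> psr -> psr).
Proof.
move=> f g h; apply: psext => n.
rewrite (@psmulP n f (psmul g h) (toP n f) (toP n g * toP n h)); last first.
  by move=> j hj; rewrite psmulT; apply: coefM_eq => k hk; rewrite !toPE // (leq_trans hk).
  by move=> j hj; rewrite toPE.
rewrite (@psmulP n (psmul f g) h (toP n f * toP n g) (toP n h)); last first.
  by move=> j hj; rewrite toPE.
  by move=> j hj; rewrite psmulT; apply: coefM_eq => k hk; rewrite !toPE // (leq_trans hk).
by rewrite mulrA.
Qed.

Lemma psmulC' : commutative (@psmul K : psr -> psr -> psr).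
Proof. by move=> f g; apply: psext => n; rewrite !psmulT mulrC. Qed.

Lemma psmul1' : left_id (psC 1 : psr) (@psmul K).
Proof.
move=> f; apply: psext => n; rewrite (@psmulP n _ _ 1 (toP n f)).
- by rewrite mul1r toPE.
- by move=> j _; rewrite coefC /psC.
- by move=> j hj; rewrite toPE.
Qed.

Lemma psmulDl' : left_distributive (@psmul K : psr -> psr -> psr) (@psadd K).
Proof.
move=> f g h; apply: psext => n; rewrite /psadd !psmulT -coefD -mulrDl.
by apply: coefM_eq => // j hj; rewrite coefD !toPE.
Qed.

Lemma psaddA' : associative (@psadd K : psr -> psr -> psr).
Proof. by move=> f g h; apply: psext => n; rewrite /psadd addrA. Qed.
Lemma psaddC' : commutative (@psadd K : psr -> psr -> psr).
Proof. by move=> f g; apply: psext => n; rewrite /psadd addrC. Qed.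
Lemma psadd0' : left_id (psC 0 : psr) (@psadd K).
Proof. by move=> f; apply: psext => n; rewrite /psadd /psC; case: ifP; rewrite add0r. Qed.
Definition psopp (f : psr) : psr := fun n => - f n.
Lemma psaddN' : left_inverse (psC 0 : psr) psopp (@psadd K).
Proof. by move=> f; apply: psext => n; rewrite /psadd /psopp /psC addNr; case: ifP. Qed.

HB.instance Definition _ := GRing.isZmodule.Build psr psaddA' psaddC' psadd0' psaddN'.

Lemma one_neq0 : (psC 1 : psr) != psC 0.
Proof. apply/eqP => /(congr1 (fun f : psr => f 0%N)); rewrite /psC /=; apply/eqP; exact: oner_neq0. Qed.

HB.instance Definition _ := GRing.Zmodule_isComNzRing.Build psr psmulA' psmulC' psmul1' psmulDl' one_neq0.


Implicit Types (f g h : psr) (c : K).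

Lemma psaddE f g : psadd f g = f + g. Proof. by []. Qed.
Lemma psmulE f g : psmul f g = f * g. Proof. by []. Qed.
Lemma pscoefD f g n : (f + g) n = f n + g n. Proof. by []. Qed.
Lemma pscoefN f n : (- f) n = - f n. Proof. by []. Qed.
Lemma pscoefB f g n : (f - g) n = f n - g n. Proof. by []. Qed.
Lemma pscoefM f g n : (f * g) n = \sum_(i < n.+1) f i * g (n - i)%N. Proof. by []. Qed.
Lemma pscoefC c n : ((psC c : psr) : psr) n = if n == 0%N then c else 0. Proof. by []. Qed.
Lemma pscoef1 n : (1 : psr) n = if n == 0%N then 1 else 0. Proof. by []. Qed.
Lemma pscoef0 n : (0 : psr) n = 0. Proof. by change (@psC K 0 n = 0); rewrite /psC; case: (n == 0%N). Qed.
Lemma pspowE f k : pspow f k = f ^+ k.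
Proof. by elim: k => [|k IH] //=; rewrite exprS -IH. Qed.

Lemma pscoefCM c f n : ((psC c : psr) * f) n = c * f n.
Proof.
rewrite pscoefM big_ord_recl /= subn0 big1 ?addr0 // => i _.
by rewrite /psC /= mul0r.
Qed.
Lemma psscaleE c f : psscale c f = (psC c : psr) * f.
Proof. by apply: psext => n; rewrite pscoefCM. Qed.

Lemma psCD a b : (psC (a + b) : psr) = (psC a : psr) + (psC b : psr) :> psr.
Proof. by apply: psext => n; rewrite pscoefD !pscoefC; case: ifP; rewrite ?addr0. Qed.
Lemma psCM a b : (psC (a * b) : psr) = (psC a : psr) * (psC b : psr) :> psr.
Proof. by apply: psext => n; rewrite pscoefCM !pscoefC; case: ifP; rewrite ?mulr0. Qed.
Lemma psCN a : (psC (- a) : psr) = - (psC a : psr) :> psr.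
Proof. by apply: psext => n; rewrite pscoefN !pscoefC; case: ifP; rewrite ?oppr0. Qed.
Lemma psC1 : psC 1 = 1 :> psr. Proof. by []. Qed.
Lemma psC0 : psC 0 = 0 :> psr. Proof. by []. Qed.
Lemma psCn k : (psC (k%:R) : psr) = k%:R :> psr.
Proof. by elim: k => [|k IH] //; rewrite -addn1 !natrD psCD IH. Qed.

Lemma pscoef_sum I (r : seq I) (P : pred I) (F : I -> psr) n :
  (\sum_(i <- r | P i) F i) n = \sum_(i <- r | P i) F i n.
Proof.
apply: (big_morph (fun f : psr => f n)) => //; exact: pscoef0.
Qed.

Definition agree n f g := forall j, (j <= n)%N -> f j = g j.

Lemma agree_mul n f f' g g' : agree n f f' -> agree n g g' -> agree n (f * g) (f' * g').
Proof.
move=> hf hg j hj; rewrite !pscoefM; apply: eq_bigr => i _.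
have hi : (i <= j)%N by rewrite -ltnS.
by rewrite hf ?hg // ?(leq_trans (leq_subr _ _) hj) ?(leq_trans hi hj).
Qed.

Lemma pow_val f k n : f 0%N = 0 -> (n < k)%N -> (f ^+ k) n = 0.
Proof.
move=> f0; elim: k n => [//|k IH] n hn.
rewrite exprS pscoefM big1 // => [[i hi]] _ /=.
case: i hi => [|i] hi; first by rewrite f0 mul0r.
rewrite IH ?mulr0 //; lia.
Qed.

Definition D f : psr := fun n => (n.+1)%:R * f n.+1.

Lemma D0coef f n : D f n = (n.+1)%:R * f n.+1. Proof. by []. Qed.

Lemma DD f g : D (f + g) = D f + D g.
Proof. by apply: psext => n; rewrite /D pscoefD mulrDr. Qed.
Lemma DN f : D (- f) = - D f.
Proof. by apply: psext => n; rewrite /D pscoefN mulrN. Qed.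
Lemma DB f g : D (f - g) = D f - D g.
Proof. by rewrite DD DN. Qed.
Lemma DC c : D ((psC c : psr)) = 0.
Proof. by apply: psext => n; rewrite /D pscoefC pscoef0 mulr0. Qed.
Lemma D1 : D 1 = 0. Proof. exact: DC. Qed.

Lemma DM f g : D (f * g) = D f * g + f * D g.
Proof.
apply: psext => n; rewrite pscoefD.
transitivity ((n.+1)%:R * (f*g) n.+1); first by [].
rewrite (_ : (f * g) n.+1 = (toP n.+1 f * toP n.+1 g)`_n.+1); last exact: psmulT.
have -> : (n.+1)%:R * (toP n.+1 f * toP n.+1 g)`_n.+1 =
   ((toP n.+1 f * toP n.+1 g)^`())`_n by rewrite coef_deriv mulr_natl.
rewrite derivM coefD; congr (_ + _); symmetry; rewrite -psmulE; apply: psmulP => j hj.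
- by rewrite coef_deriv D0coef mulr_natl toPE.
- by rewrite toPE // (leq_trans hj).
- by rewrite toPE // (leq_trans hj).
- by rewrite coef_deriv D0coef mulr_natl toPE.
Qed.

Lemma DCM c f : D ((psC c : psr) * f) = (psC c : psr) * D f.
Proof. by rewrite DM DC mul0r add0r. Qed.

Lemma DX f k : D (f ^+ k.+1) = (k.+1)%:R * f ^+ k * D f.
Proof.
elim: k => [|k IH]; first by rewrite expr1 expr0 mulr1 mul1r.
rewrite exprS DM IH.
have -> : (k.+2)%:R = (k.+1)%:R + 1 :> psr by rewrite -natr1.
rewrite exprS; ring.
Qed.

End PSR.


Section PSR3.
Variable K : numFieldType.
Implicit Types (f g h : psr K) (c : K).

Lemma widen (F : nat -> K) n M : (n <= M)%N -> (forall k, (n < k)%N -> F k = 0) ->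
  \sum_(k < n.+1) F k = \sum_(k < M.+1) F k.
Proof.
move=> nM h0; rewrite (big_ord_widen _ _ (_ : n.+1 <= M.+1)%N) // big_mkcond.
by apply: eq_bigr => k _; case: ifP => // /negbT; rewrite -leqNgt => /h0.
Qed.

Lemma mul_val f g k j : (forall i, (i < k)%N -> f i = 0) -> (j < k)%N -> (f * g) j = 0.
Proof.
move=> hf hj; rewrite pscoefM big1 // => i _; rewrite hf ?mul0r //.
move: (ltn_ord i) hj; lia.
Qed.

Lemma mulnat_coef k f n : ((k%:R : psr K) * f) n = k%:R * f n.
Proof. by rewrite -psCn pscoefCM. Qed.

Lemma psCX a k : (psC (a ^+ k) : psr K) = (psC a : psr K) ^+ k.
Proof. by elim: k => [|k IH]; rewrite ?expr0 // !exprS psCM IH. Qed.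

Lemma expE f n M : f 0%N = 0 -> (n <= M)%N ->
  psexp f n = \sum_(k < M.+1) (f ^+ k) n / (k`!)%:R.
Proof.
move=> f0 nM; rewrite /psexp; under eq_bigr do rewrite pspowE.
rewrite (@widen (fun k : nat => (f ^+ k) n / (k`!)%:R) n M nM) //.
by move=> k hk; rewrite pow_val // mul0r.
Qed.

Lemma exp0 f : psexp f 0%N = 1.
Proof. by rewrite /psexp big_ord1 /= /psC /= divr1. Qed.

Lemma Dexp f : f 0%N = 0 -> D (psexp f) = D f * psexp f.
Proof.
move=> f0; apply: psext => n.
transitivity (\sum_(k < n.+1) (D f * f ^+ k) n / (k`!)%:R).
  rewrite D0coef (expE f0 (leqnn n.+1)) mulr_sumr big_ord_recl /=.
  rewrite expr0 pscoef1 /= mul0r mulr0 add0r.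
  apply: eq_bigr => k _; rewrite /bump /= add1n.
  have hk : (k.+1)%:R != 0 :> K by rewrite pnatr_eq0.
  have hf : (k`!)%:R != 0 :> K by rewrite pnatr_eq0 -lt0n fact_gt0.
  rewrite mulrA -[n.+1%:R * _]/(D (f ^+ k.+1) n) DX.
  rewrite -mulrA mulnat_coef factS natrM mulrC.
  rewrite [f ^+ k * D f]mulrC; by field; rewrite hf /= addrC natr1.
rewrite [RHS]pscoefM.
under [RHS]eq_bigr => i _ do rewrite (expE f0 (leq_subr i n)) mulr_sumr.
rewrite exchange_big /=; apply: eq_bigr => k _.
by rewrite pscoefM mulr_suml; apply: eq_bigr => i _; rewrite mulrA.
Qed.

Lemma widen0 (F : nat -> K) n M : (n <= M)%N -> (forall k, (n <= k)%N -> F k = 0) ->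
  \sum_(k < n) F k = \sum_(k < M) F k.
Proof.
move=> nM h0; rewrite (big_ord_widen _ _ nM) big_mkcond.
by apply: eq_bigr => k _; case: ifP => // /negbT; rewrite -leqNgt => /h0.
Qed.

Lemma agree_refl n f : agree n f f. Proof. by []. Qed.


Lemma hlogE g : psadd g (psC (-1)) = g - 1 :> psr K.
Proof. by rewrite psaddE psCN psC1. Qed.

Lemma logE g n M : g 0%N = 1 -> (n <= M)%N ->
  pslog g n = \sum_(k < M) (-1) ^+ k * ((g - 1) ^+ k.+1) n / (k.+1)%:R.
Proof.
move=> g0 nM; rewrite /pslog big_add1 /= big_mkord hlogE.
have h0 : (g - 1) 0%N = 0 by rewrite pscoefB g0 pscoef1 subrr.
transitivity (\sum_(k < n) (-1) ^+ k * ((g - 1) ^+ k.+1) n / (k.+1)%:R).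
  by apply: eq_bigr => k _; rewrite pspowE !exprS !mulN1r opprK.
apply: (@widen0 (fun k => (-1) ^+ k * ((g - 1) ^+ k.+1) n / (k.+1)%:R)) => // k hk.
by rewrite pow_val ?mulr0 ?mul0r // ltnS.
Qed.

Lemma Dlog g : g 0%N = 1 -> D (pslog g) * g = D g.
Proof.
move=> g0; set h := g - 1.
have h0 : h 0%N = 0 by rewrite /h pscoefB g0 pscoef1 subrr.
have step1 j : D (pslog g) j = \sum_(k < j.+1) (-1) ^+ k * (h ^+ k * D h) j.
  rewrite D0coef (logE g0 (leqnn j.+1)) mulr_sumr; apply: eq_bigr => k _.
  have hk : (k.+1)%:R != 0 :> K by rewrite pnatr_eq0.
  rewrite -mulrA mulrCA; congr (_ * _); rewrite mulrA.
  rewrite -[j.+1%:R * _]/(D (h ^+ k.+1) j) DX.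
  by rewrite -mulrA mulnat_coef mulrC mulrA mulVf // mul1r.
pose n := 0%N.
apply: psext => n0.
set S := \sum_(k < n0.+1) (- h) ^+ k.
have e2 : agree n0 (D (pslog g)) (S * D h).
  move=> j hj; rewrite step1 /S mulr_suml pscoef_sum.
  rewrite (@widen (fun k => (-1) ^+ k * (h ^+ k * D h) j) j n0 hj).
    apply: eq_bigr => k _.
    have e1 : (-1 : psr K) ^+ k = psC ((-1) ^+ k) by rewrite psCX psCN.
    by rewrite [(- h) ^+ k]exprNn e1 -mulrA pscoefCM.
  move=> k hk; rewrite (@mul_val _ _ k) ?mulr0 // => i hi.
  by rewrite pow_val.
rewrite (agree_mul e2 (@agree_refl n0 g)) //.
have hS : S * g = 1 - (- h) ^+ n0.+1.
  have := subrX1 (- h) n0.+1; rewrite -/S => e.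
  have -> : g = h + 1 by rewrite /h; ring.
  by rewrite -[1 - _]opprB e; ring.
have -> : S * D h * g = D h * (S * g) by ring.
rewrite hS mulrBr mulr1 pscoefB.
rewrite [D h * _]mulrC (@mul_val _ _ n0.+1) ?subr0 //.
  by rewrite /h DB D1 subr0.
by move=> i hi; rewrite pow_val // pscoefN h0 oppr0.
Qed.

Lemma psinvM f : f 0%N != 0 -> f * psinv f = 1.
Proof.
move=> f0; set a := f 0%N.
set h : psr K := 1 + (psC (- a^-1) : psr K) * f.
have hE : psadd (psC 1) (psscale (- a^-1) f) = h by rewrite psaddE psscaleE.
have h0 : h 0%N = 0 by rewrite /h pscoefD pscoefCM pscoef1 /= mulNr mulVf // subrr.
apply: psext => n.
set T := \sum_(k < n.+1) h ^+ k.
have e : agree n (psinv f) ((psC a^-1 : psr K) * T).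
  move=> j hj; rewrite /psinv -/a hE pscoefCM /T pscoef_sum; congr (_ * _).
  transitivity (\sum_(k < j.+1) (h ^+ k) j).
    by apply: eq_bigr => k _; rewrite pspowE.
  by apply: (@widen (fun k => (h ^+ k) j) j n hj) => k hk; rewrite pow_val.
rewrite (agree_mul (@agree_refl n f) e) //.
have hf : f * (psC a^-1 : psr K) = 1 - h.
  by rewrite /h psCN; ring.
have := subrX1 h n.+1; rewrite -/T => eT.
have -> : f * ((psC a^-1 : psr K) * T) = 1 - h ^+ n.+1.
  by rewrite mulrA hf -opprB mulNr -eT opprB.
rewrite pscoefB (@pow_val _ h n.+1 n) // subr0; first reflexivity.
Qed.
End PSR3.


Section PSR4.
Variable K : numFieldType.
Implicit Types (f g h X Y : psr K) (c : K).
Notation pC c := (psC c : psr K).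

Lemma uniq_ode (Phi : psr K -> psr K) X Y :
  (forall n X Y, agree n X Y -> Phi X n = Phi Y n) ->
  D X = Phi X -> D Y = Phi Y -> X 0%N = Y 0%N -> X = Y.
Proof.
move=> hP hX hY h0.
suff H : forall n, agree n X Y by apply: psext => n; exact: (H n n).
elim=> [|n IH] j hj.
  by move: hj; rewrite leqn0 => /eqP ->.
rewrite leq_eqVlt in hj; case/orP: hj => [/eqP ->|]; last by rewrite ltnS; exact: IH.
have e : D X n = D Y n by rewrite hX hY; exact: hP.
have hn : (n.+1)%:R != 0 :> K by rewrite pnatr_eq0.
rewrite !D0coef in e.
by apply: (mulfI hn).
Qed.

Lemma agreeD n f f' g g' : agree n f f' -> agree n g g' -> agree n (f + g) (f' + g').
Proof. by move=> h1 h2 j hj; rewrite !pscoefD h1 ?h2. Qed.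
Lemma agreeN n f f' : agree n f f' -> agree n (- f) (- f').
Proof. by move=> h1 j hj; rewrite !pscoefN h1. Qed.
Lemma agreeB n f f' g g' : agree n f f' -> agree n g g' -> agree n (f - g) (f' - g').
Proof. by move=> h1 h2; apply: agreeD => //; exact: agreeN. Qed.

Lemma Dlin c : D (pslin c : psr K) = pC c.
Proof. by apply: psext => n; rewrite D0coef pscoefC /pslin /=; case: n => [|n] //=; rewrite ?mul1r ?mulr0. Qed.
Lemma lin0 c : (pslin c : psr K) 0%N = 0. Proof. by []. Qed.

Lemma Dexplin c : D (psexp (pslin c) : psr K) = pC c * psexp (pslin c).
Proof. by rewrite Dexp // Dlin. Qed.

Lemma psCB a b : pC (a - b) = pC a - pC b. Proof. by rewrite psCD psCN. Qed.
Lemma psCV2 : pC (2^-1) * 2%:R = 1.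
Proof. by rewrite -psCn -psCM mulVf ?pnatr_eq0. Qed.


Section Main.
Variables (u beta w : K).
Hypothesis hw : w ^+ 2 = (u + 1) ^+ 2 - 4.
Hypothesis w0 : w != 0.

Let a := w / 2.
Let c := (u - 1) / 2.
Let ea : psr K := psexp (pslin a).
Let ema : psr K := psexp (pslin (- a)).
Let ch : psr K := pC (2^-1) * (ea + ema).
Let sh : psr K := pC (2^-1) * (ea - ema).

Lemma chE : pscosh a = ch.
Proof. by rewrite /pscosh psscaleE psaddE. Qed.
Lemma shE : pssinh a = sh.
Proof. by rewrite /pssinh psscaleE psaddE psscaleE psCN mulN1r. Qed.

Lemma Dch : D ch = pC a * sh.
Proof.
rewrite /ch /sh DCM DD /ea /ema !Dexplin psCN; ring.
Qed.
Lemma Dsh : D sh = pC a * ch.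
Proof.
rewrite /ch /sh DCM DB /ea /ema !Dexplin psCN; ring.
Qed.

Lemma two0 : (2 : K) != 0. Proof. by rewrite pnatr_eq0. Qed.

Lemma ch0 : ch 0%N = 1.
Proof. by rewrite /ch pscoefCM pscoefD /ea /ema !exp0 mulVf // two0. Qed.
Lemma sh0 : sh 0%N = 0.
Proof. by rewrite /sh pscoefCM pscoefB /ea /ema !exp0 subrr mulr0. Qed.

Let H : psr K := pC w * ch + pC (- (1 + u)) * sh.
Lemma HE : psadd (psscale w (pscosh (w / 2))) (psscale (- (1 + u)) (pssinh (w / 2))) = H.
Proof. by rewrite -/a chE shE psaddE !psscaleE. Qed.

Lemma DH : D H = pC a * (pC w * sh + pC (- (1 + u)) * ch).
Proof. rewrite /H DD (DCM w ch) (DCM _ sh) Dch Dsh; ring. Qed.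
Lemma DDH : D (D H) = pC a * pC a * H.
Proof. rewrite DH DCM DD (DCM w sh) (DCM _ ch) Dch Dsh /H; ring. Qed.

Lemma H0 : H 0%N = w.
Proof. by rewrite /H pscoefD !pscoefCM ch0 sh0 mulr0 mulr1 addr0. Qed.
Lemma DH0 : D H 0%N = a * - (1 + u).
Proof. by rewrite DH pscoefCM pscoefD !pscoefCM ch0 sh0 mulr0 mulr1 add0r. Qed.

Let Hi : psr K := psinv H.
Lemma HHi : H * Hi = 1.
Proof. by apply: psinvM; rewrite H0. Qed.
Lemma Hi0 : Hi 0%N = w^-1.
Proof. by rewrite /Hi /psinv H0 big_ord1 /= /psC /= mulr1. Qed.

Lemma DHi : D Hi = - (D H * Hi * Hi).
Proof.
have e : D H * Hi + H * D Hi = 0 by rewrite -DM HHi D1.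
have e2 : Hi * (D H * Hi + H * D Hi) = 0 by rewrite e mulr0.
transitivity (D Hi * (H * Hi)); first by rewrite HHi mulr1.
apply/eqP; rewrite -subr_eq0 -e2; apply/eqP; ring.
Qed.

Let E : psr K := D H * Hi.
Lemma DE : D E = pC (a * a) - E * E.
Proof.
rewrite /E DM DDH DHi psCM.
transitivity (pC a * pC a * (H * Hi) - D H * Hi * (D H * Hi)); first ring.
by rewrite HHi mulr1.
Qed.
Lemma E0 : E 0%N = - (1 + u) / 2.
Proof.
rewrite /E pscoefM big_ord1 /= DH0 Hi0 /a.
by field; rewrite ?w0.
Qed.

Let G : psr K := pC w * Hi.
Lemma G0 : G 0%N = 1.
Proof. by rewrite /G pscoefCM Hi0 mulfV. Qed.
Lemma DG : D G = - E * G.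
Proof. rewrite /G DCM DHi /E; ring. Qed.

Let L : psr K := pslog G.
Lemma DL : D L = - E.
Proof.
have GGi : G * psinv G = 1 by apply: psinvM; rewrite G0 oner_neq0.
transitivity (D L * G * psinv G); first by rewrite -mulrA GGi mulr1.
by rewrite /L Dlog ?G0 // DG -mulrA GGi mulr1.
Qed.
Lemma L0 : L 0%N = 0.
Proof. by rewrite /L /pslog big_geq. Qed.

Let Bh : psr K := - E - pC c.
Lemma Bh0 : Bh 0%N = 1.
Proof. rewrite /Bh pscoefB pscoefN E0 pscoefC /= /c; by field; rewrite ?two0 ?w0. Qed.

Lemma haa : a * a = c * c + 2 * c.
Proof.
rewrite /a /c.
have -> : w / 2 * (w / 2) = w ^+ 2 / 4.
  by rewrite expr2; field; rewrite ?two0 ?w0 //.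
by rewrite hw; field.
Qed.

Lemma hc : pC (u - 1) = 2%:R * pC c.
Proof. by rewrite -psCn -psCM /c; congr psC; field. Qed.

Lemma DBh : D Bh = Bh * Bh + pC (u - 1) * (Bh - 1).
Proof.
rewrite /Bh DB DN DC subr0 DE.
have ha : pC (a * a) = pC c * pC c + 2%:R * pC c by rewrite haa psCD psCM -psCn psCM.
rewrite hc ha; ring.
Qed.

Let Fh : psr K := psmul (psexp (pslin (beta * (u - 1) / 2)))
   (pspowr (psscale w (psinv (psadd (psscale w (pscosh (w / 2)))
                          (psscale (- (1 + u)) (pssinh (w / 2)))))) beta).

Lemma FhE : Fh = (psexp (pslin (beta * c)) : psr K) * psexp (pC beta * L).
Proof.
by rewrite /Fh HE -/Hi psscaleE -/G /pspowr psscaleE /c mulrA psmulE.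
Qed.

Lemma Fh0 : Fh 0%N = 1.
Proof. by rewrite FhE pscoefM big_ord1 !exp0 mulr1. Qed.

Lemma DFh : D Fh = pC beta * (Bh + pC (u - 1)) * Fh.
Proof.
rewrite FhE DM Dexplin Dexp; last by rewrite pscoefCM L0 mulr0.
rewrite DCM DL /Bh (psCM beta c) hc; ring.
Qed.

Theorem analytic (Bc Fc : psr K) :
  D Bc = Bc * Bc + pC (u - 1) * (Bc - 1) -> Bc 0%N = 1 ->
  D Fc = pC beta * (Bc + pC (u - 1)) * Fc -> Fc 0%N = 1 ->
  Fc = Fh.
Proof.
move=> hB B0 hF F0.
have eB : Bc = Bh.
  apply: (@uniq_ode (fun X => X * X + pC (u - 1) * (X - 1))) => //; last by rewrite B0 Bh0.
    move=> n X Y hXY.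
    exact: (agreeD (agree_mul hXY hXY) (agree_mul (@agree_refl K n (pC (u - 1))) (agreeB hXY (@agree_refl K n 1)))) n (leqnn n).
  exact: DBh.
subst Bc.
apply: (@uniq_ode (fun X => pC beta * (Bh + pC (u - 1)) * X)) => //; last by rewrite F0 Fh0.
  move=> n X Y hXY.
  exact: (agree_mul (@agree_refl K n (pC beta * (Bh + pC (u - 1)))) hXY) n (leqnn n).
exact: DFh.
Qed.
End Main.
End PSR4.


Section Decomp.
Variable K : numFieldType.
Variables (m : nat) (R : seq nat).
Hypothesis hu : uniq (m :: R).

Definition SA (A : {set 'I_(size R)}) : seq nat := [seq nth 0%N R (nat_of_ord i) | i <- enum A].
Definition At (t : seq nat) : {set 'I_(size R)} :=
  [set i : 'I_(size R) | nth 0%N R i \in take (index m t) t].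

Lemma uR : uniq R. Proof. by case/andP: hu. Qed.
Lemma mR : m \notin R. Proof. by case/andP: hu. Qed.

Lemma f_inj : injective (fun i : 'I_(size R) => nth 0%N R i).
Proof. by move=> i j /eqP; rewrite nth_uniq ?uR // => /eqP; apply: val_inj. Qed.

Lemma memSA_nth A (i : 'I_(size R)) : (nth 0%N R i \in SA A) = (i \in A).
Proof. by rewrite /SA (mem_map f_inj) mem_enum. Qed.

Lemma memSA_R A x : x \in SA A -> x \in R.
Proof. by case/mapP => i _ ->; exact: mem_nth. Qed.

Lemma R_ord x : x \in R -> {i : 'I_(size R) | nth 0%N R i = x}.
Proof. by move=> xR; exists (Ordinal (etrans (index_mem x R) xR)); rewrite /= nth_index. Qed.

Lemma uniqSA A : uniq (SA A).
Proof. by rewrite /SA (map_inj_uniq f_inj) enum_uniq. Qed.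

Lemma SA_disj A x : x \in SA A -> x \in SA (~: A) -> False.
Proof. by case/mapP => i; rewrite mem_enum => iA ->; rewrite memSA_nth in_setC iA. Qed.

Lemma memR_split A x : x \in R -> (x \in SA A) || (x \in SA (~: A)).
Proof. by case/R_ord => i <-; rewrite !memSA_nth in_setC; case: (i \in A). Qed.

Lemma split_inj a1 g1 a2 g2 : m \notin a1 -> m \notin a2 ->
  a1 ++ m :: g1 = a2 ++ m :: g2 -> a1 = a2 /\ g1 = g2.
Proof.
move=> h1 h2 e.
have es := congr1 (index m) e; rewrite !index_cat (negbTE h1) (negbTE h2) /= eqxx !addn0 in es.
have ea : a1 = a2.
  by rewrite -(take_size_cat (m :: g1) (erefl (size a1))) e es take_size_cat.
split => //; subst a2.
by have := congr1 (drop (size a1).+1) e; rewrite -!cat_rcons !drop_size_cat ?size_rcons.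
Qed.

Lemma sum_allpairs (F : seq nat -> K) (s t : seq (seq nat)) :
  \sum_(x <- [seq a ++ m :: g | a <- s, g <- t]) F x =
  \sum_(a <- s) \sum_(g <- t) F (a ++ m :: g).
Proof.
elim: s => [|a s IH]; first by rewrite !big_nil.
by rewrite allpairs_cons big_cat big_map big_cons IH.
Qed.

Lemma mem_filterAt A t :
  (t \in [seq t <- permutations (m :: R) | A == At t]) =
  (t \in [seq a ++ m :: g | a <- permutations (SA A), g <- permutations (SA (~: A))]).
Proof.
rewrite mem_filter mem_permutations.
apply/andP/allpairsP.
- case=> /eqP -> pt.
  have mt : m \in t by rewrite (perm_mem pt) mem_head.
  have ut : uniq t by rewrite (perm_uniq pt).
  set k := index m t.
  have et : t = take k t ++ m :: drop k.+1 t.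
    by rewrite -{1}(nth_index 0%N mt) -drop_nth ?index_mem // cat_take_drop.
  move: (ut); rewrite {1}et cat_uniq /= => /and3P [ua /norP [ma hg] /andP [mg ug]].
  exists (take k t, drop k.+1 t); split => //=; rewrite mem_permutations.
  + apply: uniq_perm => //; first exact: uniqSA.
    move=> x; apply/idP/idP.
    * move=> xa; have xR : x \in R.
        have : x \in m :: R by rewrite -(perm_mem pt) et mem_cat xa.
        by rewrite inE; case/orP => // /eqP ex; rewrite ex (negbTE ma) in xa.
      case: (R_ord xR) => i ei; rewrite -ei memSA_nth /At inE ei -/k xa //.
    * by case/mapP => i; rewrite mem_enum /At inE => hi ->.
  + apply: uniq_perm => //; first exact: uniqSA.
    move=> x; apply/idP/idP.
    * move=> xg; have xR : x \in R.
        have : x \in m :: R by rewrite -(perm_mem pt) et mem_cat inE xg !orbT.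
        by rewrite inE; case/orP => // /eqP ex; rewrite ex (negbTE mg) in xg.
      case: (R_ord xR) => i ei; rewrite -ei memSA_nth in_setC /At inE ei -/k.
      apply/negP => xa; move/hasP: hg; apply; exists x => //; by rewrite inE xg orbT.
    * case/mapP => i; rewrite mem_enum in_setC /At inE -/k => hi ex.
      have : x \in t by rewrite (perm_mem pt) inE ex mem_nth ?orbT.
      rewrite {1}et mem_cat inE ex (negbTE hi) /= -ex; case/orP => // /eqP em.
      by move: mR; rewrite -em ex mem_nth.
- case=> [[a g]] [/=]; rewrite !mem_permutations => pa pg ->.
  have ma : m \notin a by apply/negP; rewrite (perm_mem pa) => /memSA_R; apply/negP; exact: mR.
  have mg : m \notin g by apply/negP; rewrite (perm_mem pg) => /memSA_R; apply/negP; exact: mR.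
  split.
    apply/eqP/setP => i; rewrite /At inE index_cat (negbTE ma) /= eqxx addn0.
    by rewrite take_size_cat // (perm_mem pa) memSA_nth.
  apply: uniq_perm => //.
    rewrite cat_uniq (perm_uniq pa) uniqSA /= (perm_uniq pg) uniqSA mg andbT /=.
    rewrite andbT (negbTE ma) /=; apply/hasP => [[x xg xa]].
    by apply: (@SA_disj A x); [rewrite -(perm_mem pa) | rewrite -(perm_mem pg)].
  move=> x; rewrite mem_cat !inE (perm_mem pa) (perm_mem pg).
  case: (x =P m) => [-> | _] /=; first by rewrite orbT.
  apply/idP/idP; first by case/orP => /memSA_R.
  exact: memR_split.
Qed.

Lemma decomp (F : seq nat -> K) :
  \sum_(t <- permutations (m :: R)) F t =
  \sum_(A : {set 'I_(size R)}) \sum_(a <- permutations (SA A))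
     \sum_(g <- permutations (SA (~: A))) F (a ++ m :: g).
Proof.
transitivity (\sum_(t <- permutations (m :: R)) \sum_(A : {set 'I_(size R)})
   (if A == At t then F t else 0)).
  by apply: eq_bigr => t _; rewrite -big_mkcond big_pred1_eq.
rewrite exchange_big /=; apply: eq_bigr => A _.
rewrite -big_mkcond /= -big_filter -sum_allpairs.
apply: perm_big; apply: uniq_perm.
- by rewrite filter_uniq // permutations_uniq.
- apply: allpairs_uniq; rewrite ?permutations_uniq //.
  move=> p1 p2 /allpairsP [[a1 g1] [h1 _ ->]] /allpairsP [[a2 g2] [h2 _ ->]] /= e.
  rewrite !mem_permutations in h1 h2.
  have ma1 : m \notin a1 by apply/negP; rewrite (perm_mem h1) => /memSA_R; apply/negP; exact: mR.
  have ma2 : m \notin a2 by apply/negP; rewrite (perm_mem h2) => /memSA_R; apply/negP; exact: mR.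
  by case: (split_inj ma1 ma2 e) => -> ->.
- exact: mem_filterAt.
Qed.
End Decomp.


Definition okn (x : nat) (s : seq nat) (rb : bool) : bool :=
  if s is y :: _ then (x < y)%N else rb.
Fixpoint da (lok rb : bool) (s : seq nat) : nat :=
  match s with
  | [::] => 0%N
  | x :: s' => ((lok && okn x s' rb) + da (okn x s' rb) rb s')%N
  end.
Fixpoint rlm (s : seq nat) : nat :=
  match s with
  | [::] => 0%N
  | x :: s' => (all (fun y => x < y)%N s' + rlm s')%N
  end.

Lemma da_split lok rb a m g : all (fun x => m < x)%N a ->
  da lok rb (a ++ m :: g) = (da lok false a + da (if a is [::] then lok else false) rb (m :: g))%N.
Proof.
elim: a lok => [|x a IH] lok //= /andP [mx ha].
have e : okn x (a ++ m :: g) rb = okn x a false.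
  by case: a {IH ha} => [|y a] //=; apply/negbTE; rewrite -leqNgt ltnW.
rewrite e IH //; case: a {IH ha e} => [|y a] /=.
  by rewrite andbF !addn0.
by rewrite addnA.
Qed.

Lemma da_main rb a m g : all (fun x => m < x)%N a -> all (fun x => m < x)%N g ->
  da true rb (a ++ m :: g) =
  (da true false a + ((a == [::]) && ((g != [::]) || rb)) + da true rb g)%N.
Proof.
move=> ha hg; rewrite da_split //.
case: g hg => [|y g] /= hg.
  by case: a {ha} => [|x a] /=; rewrite ?addn0 ?orbF.
case/andP: hg => my _; rewrite my.
  by case: a {ha} => [|x a] /=; rewrite !addnA.
Qed.

Lemma rlm_split a m g : all (fun x => m < x)%N a -> all (fun x => m < x)%N g ->
  rlm (a ++ m :: g) = (rlm g).+1.
Proof.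
move=> ha hg; elim: a ha => [|x a IH] /=; first by rewrite hg.
case/andP => mx ha; rewrite IH //.
have -> : all (fun y => x < y)%N (a ++ m :: g) = false.
  by apply/negbTE; rewrite all_cat /= ltnNge ltnW // andbF.
by [].
Qed.

Section Comb.
Variables (K : numFieldType) (u : K).

Definition W (rb : bool) (b : K) (t : seq nat) : K := u ^+ da true rb t * b ^+ rlm t.
Definition P (rb : bool) (b : K) (s : seq nat) : K := \sum_(t <- permutations s) W rb b t.
Definition fac (rb : bool) (i j : nat) : K := if (i == 0%N) && ((0 < j)%N || rb) then u else 1.

Lemma W_split rb b a m g : all (fun x => m < x)%N a -> all (fun x => m < x)%N g ->
  W rb b (a ++ m :: g) = b * fac rb (size a) (size g) * W false 1 a * W rb b g.
Proof.
move=> ha hg; rewrite /W da_main // rlm_split // /fac size_eq0 lt0n size_eq0.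
rewrite !exprD expr1n mulr1 exprS.
case: ((a == [::]) && ((g != [::]) || rb)); rewrite ?expr1 ?expr0; ring.
Qed.

Lemma P_perm rb b s s' : perm_eq s s' -> P rb b s = P rb b s'.
Proof.
move=> ps; apply: perm_big; apply: uniq_perm; rewrite ?permutations_uniq // => t.
by rewrite !mem_permutations; apply/idP/idP => h; apply: perm_trans h _; rewrite // perm_sym.
Qed.


Lemma size_SA R (A : {set 'I_(size R)}) : size (SA A) = #|A|.
Proof. by rewrite size_map -cardE. Qed.

Lemma P_decomp rb b m R : uniq (m :: R) -> all (fun x => m < x)%N R ->
  P rb b (m :: R) = b * \sum_(A : {set 'I_(size R)})
     fac rb #|A| #|~: A| * P false 1 (SA A) * P rb b (SA (~: A)).
Proof.
move=> hu hR; rewrite /P (decomp hu) mulr_sumr; apply: eq_bigr => A _.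
have allA (B : {set 'I_(size R)}) a : a \in permutations (SA B) -> all (fun x => m < x)%N a.
  rewrite mem_permutations => pa; apply/allP => x; rewrite (perm_mem pa) => /memSA_R xR.
  exact: (allP hR).
transitivity (\sum_(a <- permutations (SA A))
   (b * fac rb #|A| #|~:A| * W false 1 a) * \sum_(g <- permutations (SA (~: A))) W rb b g).
  apply: eq_big_seq => a ha; rewrite mulr_sumr; apply: eq_big_seq => g hg.
  rewrite W_split ?(allA _ _ ha) ?(allA _ _ hg) //.
  by move: ha hg; rewrite !mem_permutations => /perm_size -> /perm_size ->; rewrite !size_SA.
by rewrite -mulr_suml -mulr_sumr !mulrA.
Qed.

Definition Rec rb b n := b * \sum_(A : {set 'I_n})
  fac rb #|A| #|~: A| * P false 1 (iota 0 #|A|) * P rb b (iota 0 #|~: A|).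

Lemma P_min rb b m R : uniq (m :: R) -> all (fun x => m < x)%N R ->
  (forall s, uniq s -> (size s <= size R)%N -> forall rb b, P rb b s = P rb b (iota 0 (size s))) ->
  P rb b (m :: R) = Rec rb b (size R).
Proof.
move=> hu hR IH; rewrite P_decomp // /Rec; congr (_ * _); apply: eq_bigr => A _.
have hc (B : {set 'I_(size R)}) : (#|B| <= size R)%N by rewrite -[X in (_ <= X)%N]card_ord max_card.
rewrite (IH (SA A)) ?(uniqSA hu) ?size_SA ?hc //; congr (_ * _).
by rewrite IH ?(uniqSA hu) ?size_SA ?hc.
Qed.

Lemma P_inv s : uniq s -> forall rb b, P rb b s = P rb b (iota 0 (size s)).
Proof.
move: {2}(size s) (leqnn (size s)) => N; elim: N s => [|N IH] s.
  by rewrite leqn0 size_eq0 => /eqP ->.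
move=> hs us rb b; case: s hs us => [|x s0] hs us; first by [].
have ps : perm_eq (sort leq (x :: s0)) (x :: s0) by rewrite perm_sort.
have ss : sorted ltn (sort leq (x :: s0)).
  by rewrite ltn_sorted_uniq_leq sort_uniq us sort_sorted //; exact: leq_total.
case e : (sort leq (x :: s0)) => [|m R].
  by move: (perm_size ps); rewrite e.
rewrite e in ps ss.
have hR : all (fun y => m < y)%N R by apply: (order_path_min ltn_trans ss).
have huR : uniq (m :: R) by rewrite (perm_uniq ps).
have sz : size (x :: s0) = (size R).+1 by rewrite -(perm_size ps).
have IH' : forall s, uniq s -> (size s <= size R)%N -> forall rb b, P rb b s = P rb b (iota 0 (size s)).
  by move=> s' us' hs' rb' b'; apply: IH => //; move: hs hs'; rewrite sz; lia.
rewrite -(P_perm rb b ps) (P_min rb b huR hR IH') sz /=.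
have hi : all (fun y => 0 < y)%N (iota 1 (size R)).
  by apply/allP => y; rewrite mem_iota; case/andP.
have ui : uniq (0%N :: iota 1 (size R)) by rewrite -/(iota 0 (size R).+1) iota_uniq.
by rewrite (P_min rb b ui hi) ?size_iota // => s' us' hs'; apply: IH'; rewrite // -(size_iota 1 (size R)).
Qed.

Definition aa rb b n := P rb b (iota 0 n).

Lemma aa0 rb b : aa rb b 0 = 1.
Proof. by rewrite /aa /P /= big_cons big_nil /W /= !expr0 mulr1 addr0. Qed.

Lemma aaS rb b n : aa rb b n.+1 = Rec rb b n.
Proof.
rewrite /aa /=.
have hi : all (fun y => 0 < y)%N (iota 1 n) by apply/allP => y; rewrite mem_iota; case/andP.
have ui : uniq (0%N :: iota 1 n) by rewrite -/(iota 0 n.+1) iota_uniq.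
rewrite (P_min rb b ui hi) ?size_iota // => s us _; exact: P_inv.
Qed.

Lemma sum_card (h : nat -> K) n :
  \sum_(A : {set 'I_n}) h #|A| = \sum_(j < n.+1) 'C(n, j)%:R * h j.
Proof.
rewrite (partition_big (fun A : {set 'I_n} => inord #|A| : 'I_n.+1) xpredT) //=.
apply: eq_bigr => j _.
have hA (A : {set 'I_n}) : (#|A| <= n)%N by rewrite -[X in (_ <= X)%N]card_ord max_card.
transitivity (\sum_(A : {set 'I_n} | #|A| == j) h j).
  apply: eq_big => A.
    apply/eqP/eqP => [<- | ej]; first by rewrite inordK // ltnS.
    by apply: val_inj; rewrite /= inordK ?ltnS.
  by move=> /eqP <-; rewrite inordK // ltnS.
rewrite sumr_const -[in LHS]mulr_natl; congr (_%:R * _).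
by rewrite -[X in 'C(X, _)]card_ord -card_draws cardsE.
Qed.

End Comb.


Section EGF.
Variables (K : numFieldType) (u beta : K).
Notation pC c := (psC c : psr K).

Lemma fact_neq0 n : (n`!)%:R != 0 :> K.
Proof. by rewrite pnatr_eq0 -lt0n fact_gt0. Qed.

Lemma S_neq0 n : 1 + n%:R != 0 :> K.
Proof. by rewrite addrC natr1 pnatr_eq0. Qed.

Lemma aaS' rb b n : aa u rb b n.+1 =
  b * \sum_(j < n.+1) 'C(n, j)%:R * (fac u rb j (n - j) * aa u false 1 j * aa u rb b (n - j)).
Proof.
rewrite aaS /Rec; congr (_ * _).
rewrite -(sum_card (fun j => fac u rb j (n - j) * aa u false 1 j * aa u rb b (n - j))).
apply: eq_bigr => A _.
by rewrite [#|~: A|]cardsCs setCK card_ord.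
Qed.

Lemma facsplit rb n (X : nat -> K) :
  \sum_(j < n.+1) 'C(n, j)%:R * (fac u rb j (n - j) * X j) =
  \sum_(j < n.+1) 'C(n, j)%:R * X j + (if (0 < n)%N || rb then (u - 1) * X 0%N else 0).
Proof.
rewrite !big_ord_recl /= /fac /= subn0 bin0 !mul1r.
have -> : \sum_(i < n) 'C(n, bump 0 i)%:R * ((if (bump 0 i == 0%N) && ((0 < n - bump 0 i)%N || rb) then u else 1) * X (bump 0 i))
   = \sum_(i < n) 'C(n, bump 0 i)%:R * X (bump 0 i).
  by apply: eq_bigr => i _; rewrite /bump /= add1n /= mul1r.
case: ((0 < n)%N || rb); ring.
Qed.

Lemma conv (X Y : nat -> K) n :
  (\sum_(j < n.+1) 'C(n, j)%:R * (X j * Y (n - j)%N)) / (n`!)%:R =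
  \sum_(j < n.+1) (X j / (j`!)%:R) * (Y (n - j)%N / ((n - j)`!)%:R).
Proof.
rewrite mulr_suml; apply: eq_bigr => j _.
have hj : (j <= n)%N by rewrite -ltnS.
have e := bin_fact hj.
have e' : 'C(n, j)%:R * ((j`!)%:R * ((n - j)`!)%:R) = (n`!)%:R :> K by rewrite -!natrM e.
rewrite -e'.
have h1 := fact_neq0 j; have h2 := fact_neq0 (n - j).
have h3 : 'C(n, j)%:R != 0 :> K by rewrite pnatr_eq0 -lt0n bin_gt0.
by field; rewrite h1 h2 h3.
Qed.

Definition Bc : psr K := fun n => aa u false 1 n / (n`!)%:R.
Definition Fc : psr K := fun n => aa u true beta n / (n`!)%:R.

Lemma Dcoef (a : nat -> K) n : D ((fun n => a n / (n`!)%:R) : psr K) n = a n.+1 / (n`!)%:R.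
Proof.
rewrite D0coef factS natrM.
have h1 := fact_neq0 n; have h2 : (n.+1)%:R != 0 :> K by rewrite pnatr_eq0.
by field; rewrite h1 S_neq0.
Qed.

Lemma Bc0 : Bc 0%N = 1. Proof. by rewrite /Bc aa0 divr1. Qed.
Lemma Fc0 : Fc 0%N = 1. Proof. by rewrite /Fc aa0 divr1. Qed.

Lemma DBc : D Bc = Bc * Bc + pC (u - 1) * (Bc - 1).
Proof.
apply: psext => n; rewrite Dcoef aaS' mul1r.
under eq_bigr do rewrite -mulrA.
rewrite (facsplit false n (fun j => aa u false 1 j * aa u false 1 (n - j))) /= orbF.
rewrite mulrDl conv pscoefD pscoefCM pscoefB pscoef1; congr (_ + _).
rewrite subn0 aa0 mul1r /Bc.
case: n => [|n] /=; first by rewrite aa0 fact0; field.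
by rewrite subr0 mulrA.
Qed.

Lemma DFc : D Fc = pC beta * (Bc + pC (u - 1)) * Fc.
Proof.
apply: psext => n; rewrite Dcoef aaS'.
under eq_bigr do rewrite -mulrA.
rewrite (facsplit true n (fun j => aa u false 1 j * aa u true beta (n - j))) /= orbT.
rewrite -[in RHS]mulrA [in RHS]pscoefCM [in RHS]mulrDl [in RHS]pscoefD [in RHS]pscoefCM.
rewrite -mulrA mulrDl conv; congr (_ * (_ + _)).
by rewrite subn0 aa0 mul1r /Fc mulrA.
Qed.

End EGF.


Lemma iota1S k : iota 1 k = map succn (iota 0 k).
Proof. by rewrite -(iotaDl 1 0 k). Qed.

Lemma count_da lok rb (t : seq nat) :
  count (fun i => (if i == 0%N then lok else (nth 0%N t i.-1 < nth 0%N t i)%N) &&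
                  (if i.+1 == size t then rb else (nth 0%N t i < nth 0%N t i.+1)%N))
        (iota 0 (size t)) = da lok rb t.
Proof.
elim: t lok => [|x t IH] lok //=.
rewrite iota1S count_map -IH; congr (_ + _)%N.
  by case: t {IH} => [|y t] //=.
apply: eq_in_count => i; rewrite mem_iota add0n => /= hi.
case: i hi => [|i] hi /=.
  by case: t {IH} hi => [|y t].
by [].
Qed.

Lemma count_rlm (t : seq nat) :
  count (fun i => all (fun j => (nth 0%N t i < nth 0%N t j)%N) (iota i.+1 (size t - i.+1)))
        (iota 0 (size t)) = rlm t.
Proof.
elim: t => [|x t IH] //=.
rewrite subSS subn0 !iota1S count_map -IH /=; congr (_ + _)%N.
  rewrite all_map.
  by rewrite -{3}(mkseq_nth 0%N t) /mkseq all_map.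

apply: eq_count => i /=.
by rewrite subSS -[i.+2]/(1 + i.+1)%N iotaDl all_map.
Qed.

Lemma size_pw n (s : 'S_n) : size (perm_word s) = n.
Proof. by rewrite /perm_word size_map size_enum_ord. Qed.

Lemma lrda_da n (s : 'S_n) : lrda s = da true true (perm_word s).
Proof.
rewrite -count_da size_pw /lrda; apply: eq_count => i /=.
by case: (i == 0%N); case: (i.+1 == n).
Qed.

Lemma RLmin_rlm n (s : 'S_n) : RLmin s = rlm (perm_word s).
Proof. by rewrite -count_rlm size_pw. Qed.

Lemma nth_pw n (s : 'S_n) (i : 'I_n) : nth 0%N (perm_word s) i = s i.
Proof.
by rewrite /perm_word (nth_map i) ?size_enum_ord // nth_ord_enum.
Qed.

Lemma pw_inj n : injective (@perm_word n).
Proof.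
move=> s1 s2 e; apply/permP => i; apply: val_inj.
by have := nth_pw s1 i; rewrite e nth_pw => h; rewrite /= h.
Qed.

Lemma mem_pw n (t : seq nat) :
  (t \in map (@perm_word n) (index_enum {perm 'I_n})) = perm_eq t (iota 0 n).
Proof.
apply/mapP/idP.
- case=> s _ ->.
  rewrite /perm_word -val_enum_ord (map_comp val s) perm_map //.
  apply: uniq_perm.
  + by rewrite (map_inj_uniq (@perm_inj _ s)) enum_uniq.
  + exact: enum_uniq.
  move=> x; rewrite mem_enum; apply/mapP; exists (s^-1 x)%g; rewrite ?mem_enum ?permKV //.
- move=> pt.
  have ut : uniq t by rewrite (perm_uniq pt) iota_uniq.
  have st : size t = n by rewrite (perm_size pt) size_iota.
  have ltn i : (i < n)%N -> (nth 0%N t i < n)%N.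
    move=> hi; have : nth 0%N t i \in iota 0 n by rewrite -(perm_mem pt) mem_nth // st.
    by rewrite mem_iota.
  pose f (i : 'I_n) : 'I_n := insubd i (nth 0%N t i).
  have fv i : val (f i) = nth 0%N t i by rewrite val_insubd ltn.
  have finj : injective f.
    move=> i j /(congr1 val); rewrite !fv => /eqP; rewrite nth_uniq ?st // => /eqP.
    exact: val_inj.
  exists (perm finj); first by rewrite mem_index_enum.
  apply: (@eq_from_nth _ 0%N); first by rewrite size_pw.
  move=> i hi; rewrite st in hi.
  by rewrite (nth_pw _ (Ordinal hi)) permE fv.
Qed.

Lemma sum_pw (K : numFieldType) n (F : seq nat -> K) :
  \sum_(s : 'S_n) F (perm_word s) = \sum_(t <- permutations (iota 0 n)) F t.
Proof.
rewrite -(big_map (@perm_word n) xpredT F).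
apply: perm_big; apply: uniq_perm.
- by rewrite (map_inj_uniq (@pw_inj n)) // index_enum_uniq.
- exact: permutations_uniq.
- by move=> t; rewrite mem_pw mem_permutations.
Qed.

Theorem theorem4p3 (K : numFieldType) (u beta w : K) :
  w ^+ 2 = (u + 1) ^+ 2 - 4 -> w != 0 ->
  forall n : nat,
    (\sum_(s : 'S_n) u ^+ lrda s * beta ^+ RLmin s) / (n`!)%:R =
    psmul
      (psexp (pslin (beta * (u - 1) / 2)))
      (pspowr
         (psscale w
            (psinv (psadd (psscale w (pscosh (w / 2)))
                          (psscale (- (1 + u)) (pssinh (w / 2))))))
         beta) n.
Proof.
move=> hw w0 n.
have e := analytic hw w0 (DBc u) (Bc0 u) (DFc u beta) (Fc0 u beta).
rewrite -e /Fc /aa /P -sum_pw.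
by under eq_bigr do rewrite lrda_da RLmin_rlm.
Qed.
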